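(* In the setting of the following: an affine control system $\dot{\boldsymbol{x}}=f(\boldsymbol{x})+g(\boldsymbol{x})\boldsymbol{u}$ ($f,g$ locally Lipschitz) with finite control limits $\boldsymbol{u}_{\min}\le\boldsymbol{u}\le\boldsymbol{u}_{\max}$, a HOCBF $b(\boldsymbol{x})$ of relative degree $m$ encoding the safety requirement $b(\boldsymbol{x})\ge0$, and the input replaced by a filtered input $\boldsymbol{u}_f\in\mathbb{R}^q$ generated by the first-order low-pass filter $\dot{\boldsymbol{u}}_f=\frac{1}{\tau}(\boldsymbol{\nu}-\boldsymbol{u}_f)$ with $\tau>0$ (so the FCBF $b_f(\boldsymbol{x},\boldsymbol{u}_f)=\psi_m(\boldsymbol{x},\boldsymbol{u}_f)$ and the HOCBFs $b_k^{\min}=u_{k,f}-u_{k,\min}$, $b_k^{\max}=u_{k,\max}-u_{k,f}$ have relative degree $m_a=1$ with respect to the filter): suppose (1) a Lipschitz controller $\boldsymbol{\nu}$ satisfies $\psi_{1,f}\ge0$ for all $t\ge0$ with $(\boldsymbol{x}(0),\boldsymbol{u}_f(0))\in\mathcal{C}_0\cap\dots\cap\mathcal{C}_{m-1}\cap\mathcal{C}_{0,f}$; (2) for each $k$, $b_k^{\min},b_k^{\max}$ are HOCBFs of relative degree 1 for the filter, with $b_k^{\min}(\boldsymbol{u}_f(0))\ge0$, $b_k^{\max}(\boldsymbol{u}_f(0))\ge0$ and $\psi^{\min}_{k,1}\ge0$, $\psi^{\max}_{k,1}\ge0$ satisfied by a Lipschitz $\boldsymbol{\nu}$; (3) these FCBF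 and HOCBF conditions are jointly feasible with a common solution $\boldsymbol{\nu}$ at each time $t$, which is applied. Then $\boldsymbol{u}_f$ is Lipschitz continuous, $b(\boldsymbol{x}(t))\ge0$, and $\boldsymbol{u}_{\min}\le\boldsymbol{u}_f(t)\le\boldsymbol{u}_{\max}$ for all $t\ge0$.
   Context: A class $\kappa$ function is a continuous, strictly increasing $\alpha:[0,a)\to[0,\infty]$, $a>0$, $\alpha(0)=0$. HOCBF of $b$ with relative degree $m$ for the original system: $\psi_0=b$, $\psi_i=\dot\psi_{i-1}+\alpha_i(\psi_{i-1})$ ($i=1,\dots,m$, $\alpha_i$ an $(m-i)$-times differentiable class $\kappa$ function, derivatives along the dynamics), $\mathcal{C}_i=\{\boldsymbol{x}:\psi_i(\boldsymbol{x})\ge0\}$ for $i<m$, and $\sup_{\boldsymbol{u}\in\mathcal{U}}\psi_m(\boldsymbol{x},\boldsymbol{u})\ge0$ on $\bigcap_{i<m}\mathcal{C}_i$ (coefficient of $\boldsymbol{u}$ times $\boldsymbol{u}$ nonzero on the boundary). With the filter of relative degree one: $\psi_{0,f}(\boldsymbol{x},\boldsymbol{u}_f)=\psi_m(\boldsymbol{x},\boldsymbol{u}_f)$, $\mathcal{C}_{0,f}=\{\psi_{0,f}\ge0\}$, $\psi_{1,f}=\dot\psi_{0,f}+\alpha(\psi_{0,f})$ with $\alpha$ class $\kappa$ and the derivative along $\dot{\boldsymbol{x}}=f+g\boldsymbol{u}_f$, $\dot{\boldsymbol{u}}_f=\frac1\tau(\boldsymbol{\nu}-\boldsymbol{u}_f)$;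 the FCBF condition is $\sup_{\boldsymbol{\nu}}\psi_{1,f}\ge0$ on $\mathcal{C}_{0,f}$. Similarly $\psi^{\min}_{k,1}=\dot b_k^{\min}+\alpha^{\min}_{k,1}(b_k^{\min})$, $\psi^{\max}_{k,1}=\dot b_k^{\max}+\alpha^{\max}_{k,1}(b_k^{\max})$ with class $\kappa$ functions $\alpha^{\min}_{k,1},\alpha^{\max}_{k,1}$; $u_{k,f},u_{k,\min},u_{k,\max}$ are $k$-th components. *)

(* Defs.v *)
From HB Require Import structures.
From mathcomp Require Import all_boot all_order all_algebra.
From mathcomp Require Import all_classical all_reals all_analysis.
Set Implicit Arguments. Unset Strict Implicit. Unset Printing Implicit Defensive.
Import Order.TTheory GRing.Theory Num.Theory.
Import numFieldNormedType.Exports.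
Local Open Scope classical_set_scope.
Local Open Scope ring_scope.

Definition classK (R : realType) (a : R -> R) : Prop :=
  a 0 = 0 /\ continuous a /\ {homo a : x y / x < y}.

Definition loc_lipschitz (R : realType) (V W : normedModType R) (h : V -> W) : Prop :=
  forall x0 : V, exists2 r : R, 0 < r & exists L : R, forall x y : V,
    ball x0 r x -> ball x0 r y -> `|h x - h y| <= L * `|x - y|.

Definition in_box (R : realType) (q : nat) (umin umax u : 'cV[R]_q) : Prop :=
  forall k : 'I_q, umin k ord0 <= u k ord0 <= umax k ord0.

Fixpoint psi (R : realType) (n q : nat) (f : 'cV[R]_n -> 'cV[R]_n)
  (g : 'cV[R]_n -> 'M[R]_(n, q)) (b : 'cV[R]_n -> R) (alpha : nat -> R -> R)
  (i : nat) (x : 'cV[R]_n) (u : 'cV[R]_q) : R :=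
  match i with
  | 0 => b x
  | i'.+1 => 'D_(f x + g x *m u) (fun y => psi f g b alpha i' y u) x
             + alpha i'.+1 (psi f g b alpha i' x u)
  end.

Definition rel_degree (R : realType) (n q : nat) f g (b : 'cV[R]_n -> R) alpha
  (m : nat) : Prop :=
  (forall i, (i < m)%N -> forall (x : 'cV[R]_n) (u u' : 'cV[R]_q),
      psi f g b alpha i x u = psi f g b alpha i x u') /\
  (exists (x : 'cV[R]_n) (u u' : 'cV[R]_q),
      psi f g b alpha m x u <> psi f g b alpha m x u').

(* C_i = {x | psi_i(x) >= 0}, i < m (psi_i independent of the input) *)
Definition Cset (R : realType) (n q : nat) f g (b : 'cV[R]_n -> R) alpha
  (i : nat) : set 'cV[R]_n :=
  [set x | 0 <= psi f g b alpha i x (0 : 'cV[R]_q)].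

Definition is_HOCBF (R : realType) (n q : nat) f g (b : 'cV[R]_n -> R) alpha
  (m : nat) (umin umax : 'cV[R]_q) : Prop :=
  (forall i, (0 < i <= m)%N -> classK (alpha i)) /\
  forall x : 'cV[R]_n, (forall i, (i < m)%N -> Cset f g b alpha i x) ->
    (0 <= ereal_sup [set (psi f g b alpha m x u)%:E | u in in_box umin umax])%E.

Definition filt_field (R : realType) (n q : nat) (f : 'cV[R]_n -> 'cV[R]_n)
  (g : 'cV[R]_n -> 'M[R]_(n, q)) (tau : R) (z : 'cV[R]_n * 'cV[R]_q)
  (nu : 'cV[R]_q) : 'cV[R]_n * 'cV[R]_q :=
  (f z.1 + g z.1 *m z.2, tau^-1 *: (nu - z.2)).

Definition psi1f (R : realType) (n q : nat) f g (tau : R)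
  (h : 'cV[R]_n * 'cV[R]_q -> R) (a : R -> R) (z : 'cV[R]_n * 'cV[R]_q)
  (nu : 'cV[R]_q) : R :=
  'D_(filt_field f g tau z nu) h z + a (h z).

Definition is_CBF_filt (R : realType) (n q : nat) f g (tau : R)
  (h : 'cV[R]_n * 'cV[R]_q -> R) (a : R -> R) : Prop :=
  classK a /\
  forall z : 'cV[R]_n * 'cV[R]_q, 0 <= h z ->
    (0 <= ereal_sup (range (fun nu : 'cV[R]_q => (psi1f f g tau h a z nu)%:E)))%E.

Definition bf (R : realType) (n q : nat) f g (b : 'cV[R]_n -> R) alpha (m : nat)
  (z : 'cV[R]_n * 'cV[R]_q) : R := psi f g b alpha m z.1 z.2.

Definition bmin (R : realType) (n q : nat) (umin : 'cV[R]_q) (k : 'I_q)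
  (z : 'cV[R]_n * 'cV[R]_q) : R := z.2 k ord0 - umin k ord0.
Definition bmax (R : realType) (n q : nat) (umax : 'cV[R]_q) (k : 'I_q)
  (z : 'cV[R]_n * 'cV[R]_q) : R := umax k ord0 - z.2 k ord0.

(* Main.v *)
Require Import Defs.
From HB Require Import structures.
From mathcomp Require Import all_boot all_order all_algebra.
From mathcomp Require Import all_classical all_reals all_analysis.
From mathcomp Require Import lra zify.
Import Order.TTheory GRing.Theory Num.Theory.
Import numFieldNormedType.Exports.
Local Open Scope classical_set_scope.
Local Open Scope ring_scope.
Set Implicit Arguments.
Section H.
Context {R : realType}.

Lemma within_comp (V : topologicalType) (c : R -> V) (H : V -> R) (A : set R) :
  {within A, continuous c} -> continuous H -> {within A, continuous (H \o c)}.
Proof. by move=> cc hc s; apply: (@continuous_comp (subspace A) V R c H); [exact: cc|exact: hc]. Qed.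

Lemma within_pair (V W : topologicalType) (c : R -> V) (e : R -> W) (A : set R) :
  {within A, continuous c} -> {within A, continuous e} ->
  {within A, continuous (fun s => (c s, e s))}.
Proof. by move=> cc ce s; apply: cvg_pair; [exact: cc|exact: ce]. Qed.

Lemma differentiable_snd (V W : normedModType R) (z : V * W) :
  differentiable (@snd V W) z.
Proof.
have lin : linear (@snd V W) by [].
pose sL : {linear (V * W)%type -> W} := HB.pack (@snd V W) (GRing.isLinear.Build _ _ _ _ _ lin).
rewrite (_ : snd = sL) //; apply: linear_differentiable.
by move=> w; apply: cvg_snd.
Qed.

Lemma differentiable_entry n q (k : 'I_q) (z : 'cV[R]_n * 'cV[R]_q) (c : R) :
  differentiable (fun z : 'cV[R]_n * 'cV[R]_q => z.2 k ord0 - c) z.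
Proof.
apply: differentiableB => //.
have -> : (fun z : 'cV[R]_n * 'cV[R]_q => z.2 k ord0) = (fun N : 'cV[R]_q => N k ord0) \o snd by [].
apply: differentiable_comp; [exact: differentiable_snd|exact: differentiable_coord].
Qed.

Lemma differentiable_entry' n q (k : 'I_q) (z : 'cV[R]_n * 'cV[R]_q) (c : R) :
  differentiable (fun z : 'cV[R]_n * 'cV[R]_q => c - z.2 k ord0) z.
Proof.
apply: differentiableB => //.
have -> : (fun z : 'cV[R]_n * 'cV[R]_q => z.2 k ord0) = (fun N : 'cV[R]_q => N k ord0) \o snd by [].
apply: differentiable_comp; [exact: differentiable_snd|exact: differentiable_coord].
Qed.
Lemma chain_rule (V : normedModType R) (c : R -> V) (H : V -> R) (t : R) (dc : V) :
  is_derive t 1 c dc -> differentiable H (c t) ->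
  is_derive t 1 (H \o c) ('D_dc H (c t)).
Proof.
move=> [dcd dcv] dH.
have dct : differentiable c t by apply/derivable1_diffP.
have dHc : differentiable (H \o c) t by apply: differentiable_comp.
apply: DeriveDef; first exact: diff_derivable.
rewrite deriveE // diff_comp //= -(deriveE _ dct) dcv deriveE //.
Qed.

Lemma pair_derive (V W : normedModType R) (x : R -> V) (y : R -> W) (t : R) (dx : V) (dy : W) :
  is_derive t 1 x dx -> is_derive t 1 y dy ->
  is_derive t 1 (fun s => (x s, y s)) (dx, dy).
Proof.
move=> [dxd dxv] [dyd dyv].
have dxt : differentiable x t by apply/derivable1_diffP.
have dyt : differentiable y t by apply/derivable1_diffP.
have dp : differentiable (fun s => (x s, y s)) t by apply: differentiable_pair.
apply: DeriveDef; first exact: diff_derivable.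
rewrite deriveE // diff_pair // -(deriveE _ dxt) -(deriveE _ dyt) dxv dyv //.
Qed.
Lemma comparison (a : R -> R) (h d : R -> R) :
  a 0 = 0 -> {homo a : x y / x < y} ->
  {within `[0, +oo[, continuous h} ->
  (forall t : R, 0 < t -> is_derive t 1 h (d t)) ->
  (forall t : R, 0 < t -> 0 <= d t + a (h t)) ->
  0 <= h 0 -> forall t, 0 <= t -> 0 <= h t.
Proof.
move=> a0 ainc hc hd hpos h0 t1 t1ge0.
rewrite leNgt; apply/negP => ht1.
have t1gt0 : 0 < t1.
  rewrite lt_neqAle t1ge0 andbT; apply/negP => /eqP t10.
  by move: ht1; rewrite -t10 ltNge h0.
pose S := [set s | 0 <= s <= t1 /\ 0 <= h s].
have S0 : S 0 by rewrite /S /= lexx t1ge0.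
have hS : has_sup S.
  split; first by exists 0.
  by exists t1 => s [/andP[_ ?] _].
set t0 := sup S.
have t0ge0 : 0 <= t0 by apply: sup_upper_bound.
have t0le : t0 <= t1 by apply: ge_sup; [exists 0|move=> s [/andP[_ ?] _]].
have ht0 : 0 <= h t0.
  have [->|t0pos] := eqVneq t0 0; first by [].
  have t0gt0 : 0 < t0 by rewrite lt_neqAle eq_sym t0pos.
  rewrite leNgt; apply/negP => hneg.
  have hct0 : h x @[x --> t0] --> h t0.
    have [dd _] := hd _ t0gt0.
    exact/differentiable_continuous/derivable1_diffP.
  have hn0 := cvgr_lt _ hct0 _ hneg.
  have hn : \forall t \near t0, h t < 0 by apply: hn0; exact: _.
  have [e e0 He] := (iffLR (nbhs_ballP _ _)) hn.
  have [s Ss ltse] := sup_adherent e0 hS.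
  have : ball t0 e s.
    rewrite /ball /= ger0_norm; first by rewrite ltrBlDr addrC -ltrBlDr.
    by rewrite subr_ge0; apply: sup_upper_bound.
  move=> /He; rewrite ltNge; case: Ss => _ ->; done.
have t0lt : t0 < t1.
  rewrite lt_neqAle t0le andbT; apply/negP => /eqP e.
  by move: ht1; rewrite -e ltNge ht0.
have hneg s : t0 < s -> s <= t1 -> h s < 0.
  move=> t0s st1; rewrite ltNge; apply/negP => hs.
  have : S s by split => //; rewrite st1 andbT (le_trans t0ge0) // ltW.
  move/(sup_upper_bound hS) => /= ; rewrite -/t0 leNgt t0s //.
have mono : h t0 <= h t1.
  apply: (@ger0_derive1_ndecr _ h t0 t1) => //.
  - move=> s; rewrite in_itv /= => /andP[t0s _].
    by have [] := hd s (le_lt_trans t0ge0 t0s).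
  - move=> s; rewrite in_itv /= => /andP[t0s st1].
    have spos : 0 < s := le_lt_trans t0ge0 t0s.
    rewrite derive1E; have [_ ->] := hd s spos.
    have := hpos s spos.
    have : a (h s) < 0 by rewrite -a0; apply: ainc; apply: hneg => //; exact: ltW.
    move=> ? ?; lra.
  - apply: (continuous_subspaceW _ hc) => s /=; rewrite !in_itv /= => /andP[? _].
    by rewrite (le_trans t0ge0).
by move: mono; rewrite leNgt (lt_le_trans ht1 ht0).
Qed.
Lemma derive_sum_const (V : normedModType R) (F G : V -> R) (c : R) (z v : V) :
  differentiable F z -> differentiable G z -> (forall y, F y + G y = c) ->
  'D_v F z + 'D_v G z = 0.
Proof.
move=> dF dG FG.
rewrite -deriveD; [|exact: diff_derivable|exact: diff_derivable].
have -> : (F + G) = cst c by apply/funext => y; rewrite -(FG y).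
exact: derive_cst.
Qed.

Lemma homo_le (a : R -> R) : {homo a : x y / x < y} -> {homo a : x y / x <= y}.
Proof. by move=> h y z; rewrite le_eqVlt => /orP[/eqP->//|/h/ltW]. Qed.
End H.
Unset Implicit Arguments.
Theorem corollary2 (R : realType) (n q m : nat)
  (f : 'cV[R]_n -> 'cV[R]_n) (g : 'cV[R]_n -> 'M[R]_(n, q))
  (b : 'cV[R]_n -> R) (alpha : nat -> R -> R) (umin umax : 'cV[R]_q)
  (tau : R) (a_f : R -> R) (amin amax : 'I_q -> R -> R)
  (nu : 'cV[R]_n * 'cV[R]_q -> 'cV[R]_q)
  (x : R -> 'cV[R]_n) (uf : R -> 'cV[R]_q) :
  (* standing assumptions *)
  loc_lipschitz f -> loc_lipschitz g ->
  (0 < m)%N ->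
  rel_degree f g b alpha m ->
  is_HOCBF f g b alpha m umin umax ->
  (forall i, (i < m)%N -> forall (u : 'cV[R]_q) (y : 'cV[R]_n),
      differentiable (fun y' => psi f g b alpha i y' u) y) ->
  (forall z, differentiable (bf f g b alpha m) z) ->
  0 < tau ->
  (* closed-loop trajectory of the augmented system with input nu applied *)
  {within `[0, +oo[, continuous x} -> {within `[0, +oo[, continuous uf} ->
  (forall t : R, 0 < t -> is_derive t 1 x (f (x t) + g (x t) *m uf t)) ->
  (forall t : R, 0 < t -> is_derive t 1 uf (tau^-1 *: (nu (x t, uf t) - uf t))) ->
  (* (1) FCBF *)
  lipschitz nu ->
  is_CBF_filt f g tau (bf f g b alpha m) a_f ->
  (forall i, (i < m)%N -> Cset f g b alpha i (x 0)) ->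
  0 <= bf f g b alpha m (x 0, uf 0) ->
  (forall t : R, 0 <= t ->
     0 <= psi1f f g tau (bf f g b alpha m) a_f (x t, uf t) (nu (x t, uf t))) ->
  (* (2) input-limit HOCBFs *)
  (forall k, is_CBF_filt f g tau (bmin umin k) (amin k)) ->
  (forall k, is_CBF_filt f g tau (bmax umax k) (amax k)) ->
  (forall k, 0 <= bmin umin k (x 0, uf 0)) ->
  (forall k, 0 <= bmax umax k (x 0, uf 0)) ->
  (* (3) nu is a common solution of all conditions, applied at every time *)
  (forall k (t : R), 0 <= t ->
     0 <= psi1f f g tau (bmin umin k) (amin k) (x t, uf t) (nu (x t, uf t))) ->
  (forall k (t : R), 0 <= t ->
     0 <= psi1f f g tau (bmax umax k) (amax k) (x t, uf t) (nu (x t, uf t))) ->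
  (* conclusions *)
  (exists L : R, forall s t : R, 0 <= s -> 0 <= t -> `|uf t - uf s| <= L * `|t - s|) /\
  (forall t : R, 0 <= t -> 0 <= b (x t) /\ in_box umin umax (uf t)).
Proof.
move=> _ _ m0 [rdi _] [hK _] dpsi dbf tau0 xc ufc xd ufd _ [afK _] C0 bf0 bfc
  minC maxC min0 max0 minc maxc.
pose p := fun t => (x t, uf t).
have pc : {within `[0, +oo[, continuous p} := within_pair xc ufc.
have pd : forall t : R, 0 < t -> is_derive t 1 p (filt_field f g tau (p t) (nu (p t))).
  by move=> t ht; apply: pair_derive; [exact: xd|exact: ufd].
have barrier : forall H a, classK a -> (forall z, differentiable H z) ->
    (forall t : R, 0 <= t -> 0 <= psi1f f g tau H a (p t) (nu (p t))) ->
    0 <= H (p 0) -> forall t : R, 0 <= t -> 0 <= H (p t).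
  move=> H a [a0 [_ ainc]] dH hc h0.
  apply: (@comparison R a (H \o p)
    (fun t => 'D_(filt_field f g tau (p t) (nu (p t))) H (p t)) a0 ainc).
  - apply: within_comp pc _ => z; exact: differentiable_continuous.
  - by move=> t ht; apply: chain_rule (pd t ht) (dH _).
  - by move=> t ht; apply: hc (ltW ht).
  - exact: h0.
have box t : 0 <= t -> in_box umin umax (uf t).
  move=> ht k; apply/andP; split.
  - have := barrier _ _ (proj1 (minC k)) (fun z => differentiable_entry k z (umin k ord0))
      (minc k) (min0 k) t ht.
    by rewrite /bmin /= subr_ge0.
  - have := barrier _ _ (proj1 (maxC k)) (fun z => differentiable_entry' k z (umax k ord0))
      (maxc k) (max0 k) t ht.
    by rewrite /bmax /= subr_ge0.
have bfpos := barrier _ _ afK dbf bfc bf0.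
have indep i : (i < m)%N -> forall y u, psi f g b alpha i y u = psi f g b alpha i y 0.
  by move=> im y u; apply: rdi.
have chain : forall j, (j <= m)%N -> forall t : R, 0 <= t ->
    0 <= psi f g b alpha (m - j) (x t) (uf t).
  elim=> [_ t ht|j IH jm t ht]; first by rewrite subn0; exact: bfpos.
  set i := (m - j.+1)%N.
  have im : (i < m)%N by rewrite /i; lia.
  have eS : i.+1 = (m - j)%N by rewrite /i; lia.
  have hi : (0 < i.+1 <= m)%N by rewrite ltn0Sn.
  have [a0 [_ ainc]] := hK i.+1 hi.
  rewrite indep //.
  apply: (@comparison R (alpha i.+1) (fun t => psi f g b alpha i (x t) 0)
    (fun t => 'D_(f (x t) + g (x t) *m uf t) (fun y => psi f g b alpha i y 0) (x t))
    a0 ainc) => //.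
  - exact: (within_comp xc (fun z => differentiable_continuous (dpsi i im 0 z))).
  - by move=> s hs; apply: (chain_rule (xd s hs) (dpsi i im 0 (x s))).
  - move=> s hs; have := IH (ltnW jm) s (ltW hs); rewrite -eS /=.
    have E : (fun y => psi f g b alpha i y (uf s)) = (fun y => psi f g b alpha i y 0).
      by apply/funext => y; exact: indep.
    by rewrite E indep.
  - exact: C0 i im.
split; last first.
  move=> t ht; split; last exact: box.
  by have := chain m (leqnn m) t ht; rewrite subnn.
pose B k := umax k ord0 - umin k ord0.
have B0 k : 0 <= B k.
  by have /andP[h1 h2] := box 0 (lexx 0) k; rewrite /B subr_ge0 (le_trans h1 h2).
pose C k := amin k (B k) + amax k (B k).
have aminle k : {homo amin k : y z / y <= z}.
  by have [_ [_ ?]] := proj1 (minC k); exact: homo_le.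
have amaxle k : {homo amax k : y z / y <= z}.
  by have [_ [_ ?]] := proj1 (maxC k); exact: homo_le.
have amin0 k : amin k 0 = 0 by have [? _] := proj1 (minC k).
have amax0 k : amax k 0 = 0 by have [? _] := proj1 (maxC k).
have C0' k : 0 <= C k.
  rewrite /C addr_ge0 //; [rewrite -(amin0 k)|rewrite -(amax0 k)]; 
    [exact: aminle|exact: amaxle].
pose Dm k t := 'D_(filt_field f g tau (p t) (nu (p t))) (bmin umin k) (p t).
have Dbound k t : 0 < t -> `|Dm k t| <= C k.
  move=> ht.
  pose v := filt_field f g tau (p t) (nu (p t)).
  have dmin := differentiable_entry k (p t) (umin k ord0).
  have dmax := differentiable_entry' k (p t) (umax k ord0).
  have Hsum : 'D_v (bmin umin k) (p t) + 'D_v (bmax umax k) (p t) = 0.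
    apply: (@derive_sum_const R _ (bmin umin k) (bmax umax k) (B k) (p t) v dmin dmax) => z.
    by rewrite /bmin /bmax /B; lra.
  have h1 := minc k t (ltW ht).
  have h2 := maxc k t (ltW ht).
  rewrite /psi1f -/v in h1 h2.
  have /andP[b1 b2] := box t (ltW ht) k.
  have e1 : amin k (bmin umin k (p t)) <= amin k (B k).
    by apply: aminle; rewrite /bmin /B /=; lra.
  have e2 : amax k (bmax umax k (p t)) <= amax k (B k).
    by apply: amaxle; rewrite /bmax /B /=; lra.
  have := C0' k; rewrite /C => Cp.
  have f1 : 0 <= amin k (B k).
    by rewrite -(amin0 k); apply: aminle; exact: B0.
  have f2 : 0 <= amax k (B k).
    by rewrite -(amax0 k); apply: amaxle; exact: B0.
  rewrite /Dm -/v ler_norml; apply/andP; split; lra.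
have comp k s t : 0 <= s -> s <= t -> `|uf t k ord0 - uf s k ord0| <= C k * (t - s).
  move=> hs st.
  pose hm := bmin umin k \o p.
  have -> : uf t k ord0 - uf s k ord0 = hm t - hm s by rewrite /hm /bmin /=; lra.
  have [<-|st'] := eqVneq s t; first by rewrite !subrr normr0 mulr0.
  have slt : s < t by rewrite lt_neqAle st' st.
  have hder : forall y, y \in `]s, t[ -> is_derive y 1 hm (Dm k y).
    move=> y; rewrite in_itv /= => /andP[sy _].
    exact: (chain_rule (pd y (le_lt_trans hs sy)) (differentiable_entry k (p y) (umin k ord0))).
  have hcont : {within `[s, t], continuous hm}.
    have hc0 : {within `[0, +oo[, continuous hm}.
      exact: (within_comp pc (fun z => differentiable_continuous (differentiable_entry k z (umin k ord0)))).
    apply: (continuous_subspaceW _ hc0).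
    by move=> y /=; rewrite !in_itv /= => /andP[sy _]; rewrite (le_trans hs sy).
  have [c cin E] := @MVT R hm (Dm k) s t slt hder hcont.
  rewrite E normrM (@ger0_norm _ (t - s)) ?subr_ge0 //.
  apply: ler_wpM2r; first by rewrite subr_ge0.
  apply: Dbound; move: cin; rewrite in_itv /= => /andP[sc _]; exact: le_lt_trans hs sc.
pose L := \sum_k C k.
have CL k : C k <= L by rewrite /L (bigD1 k) //= lerDl sumr_ge0.
have L0 : 0 <= L by rewrite /L sumr_ge0.
have main s t : 0 <= s -> s <= t -> `|uf t - uf s| <= L * (t - s).
  move=> hs st.
  rewrite [leLHS]/Num.Def.normr /= mx_normrE (bigmax_le _ (mulr_ge0 L0 _)) ?subr_ge0 //=.
  move=> [i j] _ /=; rewrite !mxE (ord1 j).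
  apply: le_trans (comp i s t hs st) _.
  by apply: ler_wpM2r; [rewrite subr_ge0|exact: CL].
exists L => s t hs ht.
have [st|ts] := leP s t.
  by rewrite (@ger0_norm _ (t - s)) ?subr_ge0 //; exact: main.
rewrite distrC (@ler0_norm _ (t - s)); last by rewrite subr_le0 ltW.
by rewrite opprB; apply: main => //; exact: ltW.
Qed.
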